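(* Let $k\ge1$, let $f:[-k,k]^2\to[n]^2$ be injective and $W\subset[-k,k]^2$. Let $w(f_{|W})$ be the total number of edges (constraints, counted with multiplicity) of the constraint graph $G(f_{|W})$, and let $u(f_{|W})$ be the number of these edges containing a vertex of $G(f_{|W})$ that appears in only one constraint (i.e. has degree $1$ in $G(f_{|W})$). Then $$\gamma(f_{|W})\ge u(f_{|W})+\tfrac12\big(w(f_{|W})-u(f_{|W})\big)=\tfrac12 w(f_{|W})+\tfrac12 u(f_{|W}).$$
   Context: Every vertex $x\in[n]^2$ has four incident edges $\uparrow(x),\downarrow(x),\rightarrow(x),\leftarrow(x)$, where $\rightarrow(i,j)=\leftarrow(i+1,j)$ is the edge between $(i,j)$ and $(i+1,j)$ and $\uparrow(i,j)=\downarrow(i,j+1)$ is the edge between $(i,j)$ and $(i,j+1)$; for boundary vertices the edges leading out of $[n]^2$ are included. The constraint graph $G(f_{|W})=(V,E)$ is the multigraph whose vertices are grid edges and whose edge multiset $E$ consists of the pair $(\rightarrow(f(u)),\leftarrow(f(u+(1,0))))$ for each $u$ with $u,u+(1,0)\in W$ and $f(u+(1,0))\neq f(u)+(1,0)$, and the pair $(\uparrow(f(u)),\downarrow(f(u+(0,1))))$ for each $u$ with $u,u+(0,1)\in W$ and $f(u+(0,1))\ne f(u)+(0,1)$; $V$ is the set of grid edges appearing in some pair of $E$. With $c(f_{|W})$ the number of connected components of $G(f_{|W})$, $\gamma(f_{|W})=|V|-c(f_{|W})$. *)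

(* Defs.v *)
From mathcomp Require Import all_boot all_order all_algebra.
Unset Printing Implicit Defensive.
Import Order.TTheory GRing.Theory Num.Theory.
Local Open Scope ring_scope.

Notation pt := (int * int)%type.

(* Grid edges: (true,(i,j)) is the horizontal edge between (i,j) and (i+1,j);
   (false,(i,j)) is the vertical edge between (i,j) and (i,j+1).
   Edges leading out of [n]^2 are representable as well. *)
Notation gedge := (bool * pt)%type.

Definition eright (x : pt) : gedge := (true, x).
Definition eleft  (x : pt) : gedge := (true, (x.1 - 1, x.2)).
Definition eup    (x : pt) : gedge := (false, x).
Definition edown  (x : pt) : gedge := (false, (x.1, x.2 - 1)).

Definition e1 : pt := (1, 0).
Definition e2 : pt := (0, 1).
Definition addp (x y : pt) : pt := (x.1 + y.1, x.2 + y.2).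

Definition rng (k : nat) : seq int := [seq (i%:Z - k%:Z) | i <- iota 0 (k + k).+1].
Definition box (k : nat) : seq pt := [seq (a, b) | a <- rng k, b <- rng k].

Definition in_grid (n : nat) (x : pt) : bool :=
  (1 <= x.1 <= n%:Z) && (1 <= x.2 <= n%:Z).

(* The edge multiset E of the constraint graph G(f_|W): one pair per
   u in W (with the relevant neighbour in W and the constraint violated). *)
Definition constraints (k : nat) (f : pt -> pt) (W : {pred pt}) : seq (gedge * gedge) :=
  [seq (eright (f u), eleft (f (addp u e1)))
     | u <- box k & (u \in W) && (addp u e1 \in W) && (f (addp u e1) != addp (f u) e1)]
  ++
  [seq (eup (f u), edown (f (addp u e2)))
     | u <- box k & (u \in W) && (addp u e2 \in W) && (f (addp u e2) != addp (f u) e2)].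

Definition cvertices k f W : seq gedge :=
  undup (flatten [seq [:: p.1; p.2] | p <- constraints k f W]).

Definition cvtype k f W : finType := seq_sub (cvertices k f W).

Definition cadj k f W : rel (cvtype k f W) :=
  fun x y => ((ssval x, ssval y) \in constraints k f W)
          || ((ssval y, ssval x) \in constraints k f W).

Definition ncomp k f W : nat := n_comp (cadj k f W) (@predT (cvtype k f W)).

Definition gamma k f W : nat := #|cvtype k f W| - ncomp k f W.

Definition wconstr k f W : nat := size (constraints k f W).

Definition cdeg k f W (v : gedge) : nat :=
  count (fun p : gedge * gedge => (p.1 == v) || (p.2 == v)) (constraints k f W).

Definition uconstr k f W : nat :=
  count (fun p : gedge * gedge => (cdeg k f W p.1 == 1%N) || (cdeg k f W p.2 == 1%N))
        (constraints k f W).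

(* Main.v *)
Require Import Defs.
From mathcomp Require Import all_boot all_order all_algebra.
From mathcomp Require Import zify.
Set Implicit Arguments.
Unset Strict Implicit.

Definition Vs (T : choiceType) (s : seq (T*T)) : seq T :=
  undup (flatten [seq [:: p.1; p.2] | p <- s]).
Definition adjs (T : choiceType) (s : seq (T*T)) : rel (seq_sub (Vs s)) :=
  fun x y => ((ssval x, ssval y) \in s) || ((ssval y, ssval x) \in s).
Arguments adjs [T] s.
Definition degs (T : choiceType) (s : seq (T*T)) (v : T) : nat :=
  count (fun p : T*T => (p.1 == v) || (p.2 == v)) s.
Definition us (T : choiceType) (s : seq (T*T)) : nat :=
  count (fun p : T*T => (degs s p.1 == 1%N) || (degs s p.2 == 1%N)) s.
Definition tt_ (T : choiceType) (s : seq (T*T)) (v : T) (p : T*T) : nat :=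
  (p.1 == v) * (2 - (degs s p.2 == 1%N)) + (p.2 == v) * (2 - (degs s p.1 == 1%N)).
Definition beta (T : choiceType) (s : seq (T*T)) (v : T) : nat :=
  (degs s v == 1%N) * \sum_(p <- s) tt_ s v p.
Definition chg (T : choiceType) (s : seq (T*T)) (v : T) : nat :=
  4 - degs s v - beta s v.
Definition nb (T : choiceType) (s : seq (T*T)) (x y : T) : bool :=
  ((x, y) \in s) || ((y, x) \in s).

Lemma count_sumE (A : Type) (a : pred A) l : count a l = \sum_(x <- l) (a x : nat).
Proof. elim: l => [|x l IH]; by rewrite ?big_nil ?big_cons //= IH. Qed.

Lemma count_orle (A : Type) (a b : pred A) l :
  count (fun x => a x || b x) l <= count a l + count b l.
Proof. elim: l => //= x l IH; case: (a x); case: (b x) => /=; lia. Qed.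

Lemma sum_ge1 (I : finType) (P : pred I) (F : I -> nat) a :
  P a -> F a <= \sum_(i | P i) F i.
Proof. by move=> Pa; rewrite (bigD1 a) //= leq_addr. Qed.

Lemma sum_ge2 (I : finType) (P : pred I) (F : I -> nat) a b :
  P a -> P b -> b != a -> F a + F b <= \sum_(i | P i) F i.
Proof.
move=> Pa Pb ba; rewrite (bigD1 a) //= leq_add2l (bigD1 b) /=; last by rewrite Pb ba.
exact: leq_addr.
Qed.

Lemma sum_ge3 (I : finType) (P : pred I) (F : I -> nat) a b c :
  P a -> P b -> P c -> b != a -> c != a -> c != b ->
  F a + F b + F c <= \sum_(i | P i) F i.
Proof.
move=> Pa Pb Pc ba ca cb; rewrite (bigD1 a) //= -addnA leq_add2l.
rewrite (bigD1 b) /=; last by rewrite Pb ba.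
rewrite leq_add2l (bigD1 c) /=; last by rewrite Pc ca cb.
exact: leq_addr.
Qed.

Section Abs.
Variable T : choiceType.
Variable s : seq (T*T).
Hypothesis Hnl : forall p, p \in s -> p.1 != p.2.
Hypothesis H1 : forall v, count (fun p : T*T => p.1 == v) s <= 1.
Hypothesis H2 : forall v, count (fun p : T*T => p.2 == v) s <= 1.

Lemma memVs1 p : p \in s -> p.1 \in Vs s.
Proof. by move=> ps; rewrite mem_undup; apply/flatten_mapP; exists p => //; rewrite inE eqxx. Qed.
Lemma memVs2 p : p \in s -> p.2 \in Vs s.
Proof. by move=> ps; rewrite mem_undup; apply/flatten_mapP; exists p => //; rewrite !inE eqxx orbT. Qed.

Lemma memVsP x : x \in Vs s -> exists2 p, p \in s & (p.1 == x) || (p.2 == x).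
Proof.
rewrite mem_undup => /flatten_mapP [p ps]; rewrite !inE => h.
by exists p => //; rewrite ![_ == x]eq_sym.
Qed.

Lemma deg_le2 v : degs s v <= 2.
Proof. apply: leq_trans (count_orle _ _ _) _; have := H1 v; have := H2 v; lia. Qed.

Lemma deg_ge1 x : x \in Vs s -> 0 < degs s x.
Proof. by case/memVsP => p ps h; rewrite /degs -has_count; apply/hasP; exists p. Qed.

Lemma nb_sym x y : nb s x y = nb s y x.
Proof. by rewrite /nb orbC. Qed.

Lemma nb_neq x y : nb s x y -> x != y.
Proof. by case/orP => /Hnl //=; rewrite eq_sym. Qed.

Lemma nb_mem x y : nb s x y -> y \in Vs s.
Proof. by case/orP => /[dup] h => [/memVs2|/memVs1]. Qed.

Lemma deg_nb x : x \in Vs s -> exists y, nb s x y.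
Proof.
case/memVsP => -[a b] ps /= /orP[] /eqP <-; first by exists b; rewrite /nb ps.
by exists a; rewrite /nb ps orbT.
Qed.

Lemma tt_le v p : p \in s -> tt_ s v p <= 2 * ((p.1 == v) || (p.2 == v)).
Proof.
move=> /Hnl; rewrite /tt_; case: (p.1 =P v) => [->|_]; case: (p.2 =P v) => [->|_] //=;
  rewrite ?eqxx //; lia.
Qed.

Lemma beta_le2 v : beta s v <= 2.
Proof.
rewrite /beta; case: eqP => //= dv; rewrite mul1n.
apply: (@leq_trans (\sum_(p <- s) 2 * ((p.1 == v) || (p.2 == v)))).
  by rewrite big_seq_cond [X in _ <= X]big_seq_cond; apply: leq_sum => p /andP[ps _]; apply: tt_le.
by rewrite -big_distrr /= -count_sumE -/(degs s v) dv.
Qed.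

Lemma size1_eq (A : eqType) (l : seq A) x : size l = 1%N -> x \in l -> l = [:: x].
Proof. by case: l => [|a [|b l]] //= _; rewrite inE => /eqP ->. Qed.

Lemma beta_F3 v p : p \in s -> degs s v = 1%N -> p.1 == v -> degs s p.2 = 1%N -> beta s v <= 1.
Proof.
move=> ps dv /eqP p1 d2; rewrite /beta dv eqxx mul1n.
have -> : \sum_(p <- s) tt_ s v p = \sum_(q <- s | (q.1 == v) || (q.2 == v)) tt_ s v q.
  rewrite [RHS]big_mkcond; apply: eq_bigr => q _; case: ifP => // /negbT; rewrite negb_or.
  by case/andP => /negbTE h1 /negbTE h2; rewrite /tt_ h1 h2.
rewrite -(big_filter s (fun q : T*T => (q.1 == v) || (q.2 == v))) (@size1_eq _ [seq q <- s | (q.1 == v) || (q.2 == v)] p); last by rewrite mem_filter p1 eqxx ps.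
  have := Hnl ps; rewrite big_seq1 /tt_ p1 eqxx d2 eqxx eq_sym => /negbTE ->; lia.
by rewrite size_filter.
Qed.

Lemma beta_F3' v p : p \in s -> degs s v = 1%N -> p.2 == v -> degs s p.1 = 1%N -> beta s v <= 1.
Proof.
move=> ps dv /eqP p1 d2; rewrite /beta dv eqxx mul1n.
have -> : \sum_(p <- s) tt_ s v p = \sum_(q <- s | (q.1 == v) || (q.2 == v)) tt_ s v q.
  rewrite [RHS]big_mkcond; apply: eq_bigr => q _; case: ifP => // /negbT; rewrite negb_or.
  by case/andP => /negbTE h1 /negbTE h2; rewrite /tt_ h1 h2.
rewrite -(big_filter s (fun q : T*T => (q.1 == v) || (q.2 == v))) (@size1_eq _ [seq q <- s | (q.1 == v) || (q.2 == v)] p); last by rewrite mem_filter p1 eqxx orbT ps.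
  have := Hnl ps; rewrite big_seq1 /tt_ p1 eqxx d2 eqxx => /negbTE ->; lia.
by rewrite size_filter.
Qed.

Lemma ch_sum x : degs s x + beta s x + chg s x = 4.
Proof. rewrite /chg; have := deg_le2 x; have := beta_le2 x; lia. Qed.

Lemma ch_ge1 x : x \in Vs s -> 1 <= chg s x.
Proof.
move=> xV; have := deg_ge1 xV; have := deg_le2 x; have := beta_le2 x.
rewrite /chg /beta; case: eqP => [->|]; lia.
Qed.

Lemma ch_deg2 x : degs s x = 2 -> chg s x = 2.
Proof. by move=> d; rewrite /chg /beta d. Qed.

Lemma ch_F3 x y : nb s x y -> degs s x = 1%N -> degs s y = 1%N -> 2 <= chg s x.
Proof.
move=> /orP[] h dx dy.
  have := beta_F3 h dx (eqxx _) dy; rewrite /chg dx; lia.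
have := beta_F3' h dx (eqxx _) dy; rewrite /chg dx; lia.
Qed.

Lemma third x y : nb s x y -> degs s x = 2 -> degs s y = 1%N -> exists2 z, nb s x z & z != y.
Proof.
move=> nxy dx dy.
have [hall|] := boolP (all (fun q : T*T => ((q.1 == x) || (q.2 == x)) ==> ((q.1 == y) || (q.2 == y))) s).
  have : degs s x <= degs s y.
    rewrite /degs -(@eq_in_count _ (fun q : T*T => ((q.1 == x) || (q.2 == x)) && ((q.1 == y) || (q.2 == y)))).
      by apply: sub_count => q /andP[].
    move=> q qs /=; move/allP: hall => /(_ q qs).
    by case: ((q.1 == x) || (q.2 == x)).
  by rewrite dx dy.
case/allPn => -[a b] qs /=; rewrite negb_imply negb_or => /and3P[hx ha hb].
case/orP: hx => /eqP ex; subst.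
  by exists b => //; rewrite /nb qs.
by exists a => //; rewrite /nb qs orbT.
Qed.

Lemma sum_const_seq (A : Type) (l : seq A) c : \sum_(x <- l) c = c * size l.
Proof. elim: l => [|x l IH]; rewrite ?big_nil ?big_cons ?IH //=; lia. Qed.

Lemma ss_neq (x y : T) (hx : x \in Vs s) (hy : y \in Vs s) :
  x != y -> SeqSub hy != SeqSub hx.
Proof. by move=> nxy; apply/eqP => /(congr1 (@ssval _ _)) /= eyx; rewrite eyx eqxx in nxy. Qed.

Lemma sum_deg : 2 * size s <= \sum_(v : seq_sub (Vs s)) degs s (ssval v).
Proof.
rewrite /degs; under eq_bigr do rewrite count_sumE.
rewrite exchange_big /= -sum_const_seq big_seq_cond [X in _ <= X]big_seq_cond.
apply: leq_sum => p /andP[ps _].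
have := @sum_ge2 _ xpredT (fun v : seq_sub (Vs s) => ((p.1 == ssval v) || (p.2 == ssval v)) : nat)
   (SeqSub (memVs1 ps)) (SeqSub (memVs2 ps)) isT isT (ss_neq _ _ (Hnl ps)).
by rewrite /= !eqxx orbT /=.
Qed.

Lemma sum_beta : 2 * us s <= \sum_(v : seq_sub (Vs s)) beta s (ssval v).
Proof.
rewrite /beta; under eq_bigr do rewrite big_distrr /=.
rewrite exchange_big /= /us count_sumE big_distrr /= big_seq_cond [X in _ <= X]big_seq_cond.
apply: leq_sum => p /andP[ps _].
have := @sum_ge2 _ xpredT (fun v : seq_sub (Vs s) => (degs s (ssval v) == 1%N) * tt_ s (ssval v) p)
   (SeqSub (memVs1 ps)) (SeqSub (memVs2 ps)) isT isT (ss_neq _ _ (Hnl ps)).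
have := Hnl ps; rewrite /= /tt_ !eqxx eq_sym => /negbTE ->.
case: (degs s p.1 == 1%N); case: (degs s p.2 == 1%N) => /=; lia.
Qed.

Lemma adjs_sym : connect_sym (adjs s).
Proof. by apply: sym_connect_sym => x y; rewrite /adjs orbC. Qed.

Lemma comp_ge4 (r : seq_sub (Vs s)) : roots (adjs s) r ->
  4 <= \sum_(v | fingraph.root (adjs s) v == r) chg s (ssval v).
Proof.
move=> rr.
have cl : forall u v, fingraph.root (adjs s) u == r -> adjs s u v -> fingraph.root (adjs s) v == r.
  move=> u v /eqP <- h; apply/eqP; apply: esym; have := connect1 h; by rewrite -(root_connect adjs_sym) => /eqP.
case: r rr cl => x hx rr cl.
have [y nxy] := deg_nb hx; have hy := nb_mem nxy.
have Pb : fingraph.root (adjs s) (SeqSub hy) == SeqSub hx by exact: (cl (SeqSub hx) (SeqSub hy) rr nxy).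
have xy := nb_neq nxy.
pose P := fun v => fingraph.root (adjs s) v == SeqSub hx.
have g1x := deg_ge1 hx; have g2x := deg_le2 x.
have g1y := deg_ge1 hy; have g2y := deg_le2 y.
have [dx|dx] : degs s x = 1%N \/ degs s x = 2 by lia.
- have [dy|dy] : degs s y = 1%N \/ degs s y = 2 by lia.
  + apply: leq_trans (@sum_ge2 _ P (fun v => chg s (ssval v)) _ _ rr Pb (ss_neq hx hy xy)) => /=.
    have := ch_F3 nxy dx dy; have := ch_F3 (etrans (nb_sym _ _) nxy) dy dx; lia.
  + have nyx : nb s y x by rewrite nb_sym.
    have [z nyz zx] := third nyx dy dx; have hz := nb_mem nyz.
    have Pc : fingraph.root (adjs s) (SeqSub hz) == SeqSub hx by exact: (cl (SeqSub hy) (SeqSub hz) Pb nyz).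
    apply: leq_trans (@sum_ge3 _ P (fun v => chg s (ssval v)) _ _ _ rr Pb Pc (ss_neq hx hy xy)
      (ss_neq hx hz (contra_neq (fun e => esym e) zx)) (ss_neq hy hz (nb_neq nyz))) => /=.
    have := ch_ge1 hx; have := ch_ge1 hz; rewrite (ch_deg2 dy); lia.
- have [dy|dy] : degs s y = 1%N \/ degs s y = 2 by lia.
  + have [z nxz zy] := third nxy dx dy; have hz := nb_mem nxz.
    have Pc : fingraph.root (adjs s) (SeqSub hz) == SeqSub hx by exact: (cl (SeqSub hx) (SeqSub hz) rr nxz).
    apply: leq_trans (@sum_ge3 _ P (fun v => chg s (ssval v)) _ _ _ rr Pb Pc (ss_neq hx hy xy)
      (ss_neq hx hz (nb_neq nxz)) (ss_neq hy hz (contra_neq (fun e => esym e) zy))) => /=.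
    have := ch_ge1 hy; have := ch_ge1 hz; rewrite (ch_deg2 dx); lia.
  + apply: leq_trans (@sum_ge2 _ P (fun v => chg s (ssval v)) _ _ rr Pb (ss_neq hx hy xy)) => /=.
    rewrite (ch_deg2 dx) (ch_deg2 dy); lia.
Qed.

Lemma main_abs : 2 * size s + 2 * us s + 4 * n_comp (adjs s) predT <= 4 * #|{: seq_sub (Vs s)}|.
Proof.
have e4 : \sum_(v : seq_sub (Vs s)) (degs s (ssval v) + beta s (ssval v) + chg s (ssval v))
   = 4 * #|{: seq_sub (Vs s)}|.
  under eq_bigr do rewrite ch_sum.
  by rewrite sum_nat_const mulnC.
have hc : 4 * n_comp (adjs s) predT <= \sum_(v : seq_sub (Vs s)) chg s (ssval v).
  rewrite (partition_big (fingraph.root (adjs s)) (roots (adjs s))); last by move=> i _; exact: (roots_root adjs_sym i).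
  rewrite mulnC -sum_nat_const.

  rewrite (eq_bigl (fun j => roots (adjs s) j)); last by move=> j; rewrite !inE andbT.
  by apply: leq_sum => r rr; apply: comp_ge4.
rewrite -e4 !big_split /=.
by apply: leq_add; first apply: leq_add; [exact: sum_deg|exact: sum_beta|exact: hc].
Qed.
End Abs.

Lemma count_inj (A B : eqType) (g : A -> B) (l : seq A) y :
  uniq l -> {in l &, injective g} -> count (fun x => g x == y) l <= 1.
Proof.
elim: l => //= x l IH /andP[xl ul] inj.
have inj' : {in l &, injective g} by move=> a b al bl; apply: inj; rewrite inE ?al ?bl orbT.
case: eqP => /= [gx|_]; last by apply: IH.
suff -> : count (fun x0 => g x0 == y) l = 0 by [].
apply/eqP; rewrite -leqn0 leqNgt -has_count; apply/hasP => -[z zl /eqP gz].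
have : z = x by apply: inj; rewrite ?inE ?zl ?eqxx ?orbT // gz gx.
by move=> ezx; rewrite -ezx zl in xl.
Qed.

Lemma count0 (A : Type) (a : pred A) l : (forall x, ~~ a x) -> count a l = 0.
Proof. by move=> h; elim: l => //= x l ->; rewrite (negbTE (h x)). Qed.

Lemma rng_uniq k : uniq (rng k).
Proof.
rewrite /rng map_inj_uniq ?iota_uniq // => a b /= h.
have : (a%:Z = b%:Z)%R by lia.
by case.
Qed.

Lemma box_uniq k : uniq (box k).
Proof. by apply: allpairs_uniq; rewrite ?rng_uniq // => -[a b] [c d] _ _ /= [-> ->]. Qed.

Lemma eleft_inj : injective eleft.
Proof. move=> [a b] [c d] [h1 h2] /=; congr pair => //; lia. Qed.
Lemma edown_inj : injective edown.
Proof. move=> [a b] [c d] [h1 h2] /=; congr pair => //; lia. Qed.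
Lemma addp_inj y : injective (addp ^~ y).
Proof. move=> [a b] [c d] [h1 h2] /=; congr pair => //; lia. Qed.

Lemma nl1 (x y : pt) : y != addp x e1 -> eright x != eleft y.
Proof.
case: x y => [a b] [c d] ne; apply/negP => /eqP [h1 h2]; move/negP: ne; apply; apply/eqP.
rewrite /addp /e1 /=; congr pair; lia.
Qed.
Lemma nl2 (x y : pt) : y != addp x e2 -> eup x != edown y.
Proof.
case: x y => [a b] [c d] ne; apply/negP => /eqP [h1 h2]; move/negP: ne; apply; apply/eqP.
rewrite /addp /e2 /=; congr pair; lia.
Qed.

Lemma c_nl k f (W : {pred pt}) p : p \in constraints k f W -> p.1 != p.2.
Proof.
rewrite mem_cat => /orP[] /mapP [u]; rewrite mem_filter => /andP[/andP[_ ne] _] -> /=.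
  exact: nl1.
exact: nl2.
Qed.

Section Conc.
Variables (k : nat) (f : pt -> pt) (W : {pred pt}).
Hypothesis finj : {in box k &, injective f}.
Hypothesis WB : {subset W <= box k}.

Lemma c_H1 v : count (fun p : gedge * gedge => p.1 == v) (constraints k f W) <= 1.
Proof.
rewrite count_cat !count_map; case: v => [[] x].
- rewrite [count _ [seq _ <- _ | _ ] in X in _ + X]count0 ?addn0; last by move=> u; rewrite /= ?xpair_eqE.
  apply: (@count_inj _ _ (fun u => eright (f u))); first exact: filter_uniq (box_uniq k).
  move=> a b; rewrite !mem_filter => /andP[_ ab] /andP[_ bb] [h]; exact: finj.
- rewrite count0 ?add0n; last by move=> u; rewrite /= ?xpair_eqE.
  apply: (@count_inj _ _ (fun u => eup (f u))); first exact: filter_uniq (box_uniq k).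
  move=> a b; rewrite !mem_filter => /andP[_ ab] /andP[_ bb] [h]; exact: finj.
Qed.

Lemma c_H2 v : count (fun p : gedge * gedge => p.2 == v) (constraints k f W) <= 1.
Proof.
rewrite count_cat !count_map; case: v => [[] x].
- rewrite [count _ [seq _ <- _ | _ ] in X in _ + X]count0 ?addn0; last by move=> u; rewrite /= ?xpair_eqE.
  apply: (@count_inj _ _ (fun u => eleft (f (addp u e1)))); first exact: filter_uniq (box_uniq k).
  move=> a b; rewrite !mem_filter => /andP[/andP[/andP[_ a1] _] _] /andP[/andP[/andP[_ b1] _] _].
  by move/eleft_inj/(finj (WB a1) (WB b1))/addp_inj.
- rewrite count0 ?add0n; last by move=> u; rewrite /= ?xpair_eqE.
  apply: (@count_inj _ _ (fun u => edown (f (addp u e2)))); first exact: filter_uniq (box_uniq k).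
  move=> a b; rewrite !mem_filter => /andP[/andP[/andP[_ a1] _] _] /andP[/andP[/andP[_ b1] _] _].
  by move/edown_inj/(finj (WB a1) (WB b1))/addp_inj.
Qed.
End Conc.

Theorem proposition3p5 (k n : nat) (f : pt -> pt) (W : {pred pt}) :
  (1 <= k)%N ->
  {in box k &, injective f} ->
  {in box k, forall x, in_grid n (f x)} ->
  {subset W <= box k} ->
  (wconstr k f W + uconstr k f W <= 2 * gamma k f W)%N.
Proof.
move=> _ finj _ WB.
have : 2 * wconstr k f W + 2 * uconstr k f W + 4 * ncomp k f W <= 4 * #|cvtype k f W|.
  exact (main_abs (@c_nl k f W) (c_H1 W finj) (c_H2 finj WB)).
rewrite /gamma; lia.
Qed.
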